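(* Let $\Xi:M_p\to M_q$ be an entanglement-breaking channel $\Xi(X)=\sum_{i=1}^l\mathrm{Tr}[XM_i]\sigma_i$, where $(M_i)_{i=1}^l$ is a POVM on $\mathbb C^p$ with $\|M_i\|_\infty=1$ for all $i$ and $\sigma_i\in D_q$, and let $\Psi:M_N\to M_k$ be any quantum channel. Then $$K_{\Xi\otimes\Psi}=K_\Xi\otimes K_\Psi,$$ where $K_{\Xi\otimes\Psi}=(\Xi\otimes\Psi)(D_{pN})$, $K_\Xi=\Xi(D_p)$, $K_\Psi=\Psi(D_N)$, and $K_\Xi\otimes K_\Psi$ denotes the smallest convex set containing all $X\otimes Y$ with $X\in K_\Xi$, $Y\in K_\Psi$.
   Context: A POVM is a family of positive semidefinite matrices summing to the identity; $D_d$ is the set of $d\times d$ density matrices; $\|\cdot\|_\infty$ is the operator norm. *)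

(* Defs.v *)
From mathcomp Require Import all_boot all_algebra.
From mathcomp Require Export complex mxtens.
From mathcomp Require Export reals.
Set Implicit Arguments. Unset Strict Implicit. Unset Printing Implicit Defensive.
Import GRing.Theory Num.Theory.
Local Open Scope ring_scope.

Section QDefs.
Variable C : numClosedFieldType.

Definition adjmx m n (A : 'M[C]_(m, n)) : 'M[C]_(n, m) := (map_mx Num.conj A)^T.

Definition vnorm n (v : 'cV[C]_n) : C := sqrtC (\sum_(j < n) `|v j 0| ^+ 2).

Definition is_opnorm n (A : 'M[C]_n) (c : C) : Prop :=
  (forall v : 'cV[C]_n, vnorm v = 1 -> vnorm (A *m v) <= c) /\
  (forall d : C, (forall v : 'cV[C]_n, vnorm v = 1 -> vnorm (A *m v) <= d) -> c <= d).

Definition psd n (A : 'M[C]_n) : Prop :=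
  adjmx A = A /\ forall v : 'cV[C]_n, 0 <= (adjmx v *m A *m v) 0 0.

Definition density n (rho : 'M[C]_n) : Prop := psd rho /\ \tr rho = 1.

Definition povm n l (E : 'I_l -> 'M[C]_n) : Prop :=
  (forall j, psd (E j)) /\ \sum_(j < l) E j = 1%:M.

Definition is_linear_map m n (Phi : 'M[C]_m -> 'M[C]_n) : Prop :=
  forall (a : C) (X Y : 'M[C]_m), Phi (a *: X + Y) = a *: Phi X + Phi Y.

(* id_{M_r} (x) Phi acting on M_r (x) M_m = M_(r*m), in the Kronecker
   index convention of mxtens_index *)
Definition ampl r m n (Phi : 'M[C]_m -> 'M[C]_n) (X : 'M[C]_(r * m))
  : 'M[C]_(r * n) :=
  \matrix_(i, j)
    Phi (\matrix_(s, t) X (mxtens_index ((mxtens_unindex i).1, s))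
                           (mxtens_index ((mxtens_unindex j).1, t)))
      (mxtens_unindex i).2 (mxtens_unindex j).2.

Definition completely_positive m n (Phi : 'M[C]_m -> 'M[C]_n) : Prop :=
  forall r (X : 'M[C]_(r * m)), psd X -> psd (ampl Phi X).

Definition trace_preserving m n (Phi : 'M[C]_m -> 'M[C]_n) : Prop :=
  forall X, \tr (Phi X) = \tr X.

Definition quantum_channel m n (Phi : 'M[C]_m -> 'M[C]_n) : Prop :=
  [/\ is_linear_map Phi, completely_positive Phi & trace_preserving Phi].

(* the linear map Phi (x) Psi : M_(m*p) -> M_(n*q), determined by
   (Phi (x) Psi)(E_ab (x) E_st) = Phi(E_ab) (x) Psi(E_st) *)
Definition tensmap m n p q (Phi : 'M[C]_m -> 'M[C]_n) (Psi : 'M[C]_p -> 'M[C]_q)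
  (X : 'M[C]_(m * p)) : 'M[C]_(n * q) :=
  \sum_(a < m) \sum_(b < m) \sum_(s < p) \sum_(t < p)
     X (mxtens_index (a, s)) (mxtens_index (b, t)) *:
       (Phi (delta_mx a b) *t Psi (delta_mx s t)).

Definition image_of_states m n (Phi : 'M[C]_m -> 'M[C]_n) : 'M[C]_n -> Prop :=
  fun Z => exists rho, density rho /\ Phi rho = Z.

Definition convex_set n (T : 'M[C]_n -> Prop) : Prop :=
  forall (t : C) X Y, 0 <= t <= 1 -> T X -> T Y -> T (t *: X + (1 - t) *: Y).

Definition conv n (S : 'M[C]_n -> Prop) : 'M[C]_n -> Prop :=
  fun Z => forall T, convex_set T -> (forall Y, S Y -> T Y) -> T Z.

Definition tens_set n q (K1 : 'M[C]_n -> Prop) (K2 : 'M[C]_q -> Prop)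
  : 'M[C]_(n * q) -> Prop :=
  conv (fun Z => exists X Y, [/\ K1 X, K2 Y & Z = X *t Y]).

End QDefs.

(* Main.v *)
Require Import Defs.
From mathcomp Require Import all_boot all_algebra.
From mathcomp Require Import complex mxtens reals.
From mathcomp Require Import sesquilinear spectral ring.
Import GRing.Theory Num.Theory.
Import mathcomp.order.order.Order.TTheory.
Set Implicit Arguments. Unset Strict Implicit. Unset Printing Implicit Defensive.
Local Open Scope ring_scope.



Lemma adjmxE {C : numClosedFieldType} m n (A : 'M[C]_(m,n)) i j :
  adjmx A i j = (A j i)^*.
Proof. by rewrite /adjmx !mxE. Qed.

Lemma adjmxK {C : numClosedFieldType} m n (A : 'M[C]_(m,n)) : adjmx (adjmx A) = A.
Proof. by apply/matrixP=> i j; rewrite !adjmxE conjCK. Qed.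

Lemma adjmxM {C : numClosedFieldType} m n p (A : 'M[C]_(m,n)) (B : 'M[C]_(n,p)) :
  adjmx (A *m B) = adjmx B *m adjmx A.
Proof.
apply/matrixP=> i j; rewrite adjmxE !mxE rmorph_sum; apply: eq_bigr => k _.
by rewrite !adjmxE rmorphM mulrC.
Qed.

Lemma adjmxD {C : numClosedFieldType} m n (A B : 'M[C]_(m,n)) :
  adjmx (A + B) = adjmx A + adjmx B.
Proof. by apply/matrixP=> i j; rewrite [in RHS]mxE !adjmxE mxE rmorphD. Qed.

Lemma adjmxZ {C : numClosedFieldType} m n (a : C) (A : 'M[C]_(m,n)) :
  adjmx (a *: A) = a^* *: adjmx A.
Proof. by apply/matrixP=> i j; rewrite [in RHS]mxE !adjmxE mxE rmorphM. Qed.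

Lemma adjmx0 {C : numClosedFieldType} m n : adjmx (0 : 'M[C]_(m,n)) = 0.
Proof. by apply/matrixP=> i j; rewrite adjmxE !mxE rmorph0. Qed.

Lemma adjmx_tstar {C : numClosedFieldType} m n (A : 'M[C]_(m,n)) :
  adjmx A = (A ^t* )%sesqui.
Proof. by apply/matrixP=> i j; rewrite adjmxE !mxE. Qed.

Definition rk1 {C : numClosedFieldType} n (w : 'cV[C]_n) : 'M[C]_n := w *m adjmx w.

Lemma rk1E {C : numClosedFieldType} n (w : 'cV[C]_n) i j :
  rk1 w i j = w i 0 * (w j 0)^*.
Proof. by rewrite /rk1 !mxE big_ord1 adjmxE. Qed.

Lemma qformD {C : numClosedFieldType} n (v : 'cV[C]_n) A B :
  (adjmx v *m (A + B) *m v) 0 0 = (adjmx v *m A *m v) 0 0 + (adjmx v *m B *m v) 0 0.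
Proof. by rewrite mulmxDr mulmxDl mxE. Qed.

Lemma qformZ {C : numClosedFieldType} n (v : 'cV[C]_n) a A :
  (adjmx v *m (a *: A) *m v) 0 0 = a * (adjmx v *m A *m v) 0 0.
Proof. by rewrite -scalemxAr -scalemxAl mxE. Qed.

Lemma psd0 {C : numClosedFieldType} n : psd (0 : 'M[C]_n).
Proof. by split; [rewrite adjmx0|move=> v; rewrite mulmx0 mul0mx mxE]. Qed.

Lemma psdD {C : numClosedFieldType} n (A B : 'M[C]_n) : psd A -> psd B -> psd (A + B).
Proof.
move=> [hA pA] [hB pB]; split; first by rewrite adjmxD hA hB.
by move=> v; rewrite qformD addr_ge0.
Qed.

Lemma psdZ {C : numClosedFieldType} n (a : C) (A : 'M[C]_n) : 0 <= a -> psd A -> psd (a *: A).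
Proof.
move=> a0 [hA pA]; split; first by rewrite adjmxZ hA geC0_conj.
by move=> v; rewrite qformZ mulr_ge0.
Qed.

Lemma psd_sum {C : numClosedFieldType} n (I : Type) (r : seq I) (P : pred I)
  (F : I -> 'M[C]_n) : (forall i, P i -> psd (F i)) -> psd (\sum_(i <- r | P i) F i).
Proof. by move=> H; apply: (big_ind (@psd C n)) => //; [apply: psd0|apply: psdD]. Qed.

Lemma psd_rk1 {C : numClosedFieldType} n (w : 'cV[C]_n) : psd (rk1 w).
Proof.
split; first by rewrite /rk1 adjmxM adjmxK.
move=> v; rewrite /rk1 !mulmxA -mulmxA.
rewrite -[adjmx w *m v]adjmxK adjmxM adjmxK.
set x := adjmx v *m w.
by rewrite mxE big_ord1 adjmxE mul_conjC_ge0.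
Qed.



Lemma adj_delta {C : numClosedFieldType} m n (i : 'I_m) (j : 'I_n) :
  adjmx (delta_mx i j : 'M[C]_(m,n)) = delta_mx j i.
Proof.
apply/matrixP=> a b; rewrite adjmxE !mxE.
by case: (a == j); case: (b == i); rewrite /= ?rmorph0 ?rmorph1.
Qed.

Lemma psd_spectral {C : numClosedFieldType} n (A : 'M[C]_n) : psd A ->
  exists (P : 'M[C]_n) (d : 'rV[C]_n),
  [/\ P *m adjmx P = 1%:M, adjmx P *m P = 1%:M, A = adjmx P *m diag_mx d *m P
    & forall k, 0 <= d 0 k].
Proof.
move=> [hA pA].
have herm : A \is hermsymmx.
  rewrite is_hermitianmxE expr0 scale1r; apply/eqP.
  by rewrite -[LHS]hA adjmx_tstar.
have /hermitian_normalmx /orthomx_spectralP Aeq := herm.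
set P := spectralmx A in Aeq; set d := spectral_diag A in Aeq.
have Pu : P \is unitarymx by apply: spectral_unitarymx.
have PP : P *m adjmx P = 1%:M by rewrite adjmx_tstar; apply/unitarymxP.
have PP' : adjmx P *m P = 1%:M by apply: mulmx1C.
have Aeq' : A = adjmx P *m diag_mx d *m P.
  by rewrite {1}Aeq invmx_unitary // adjmx_tstar.
exists P, d; split => // k.
have := pA (adjmx (row k P)).
rewrite adjmxK rowE adjmxM Aeq' !mulmxA.
rewrite -(mulmxA _ P (adjmx P)) PP mulmx1 -(mulmxA _ P (adjmx P)) PP mulmx1.
by rewrite adj_delta -rowE -colE !mxE eqxx mulr1n.
Qed.

Lemma psd_decomp {C : numClosedFieldType} n (A : 'M[C]_n) : psd A ->
  exists w : 'I_n -> 'cV[C]_n, A = \sum_k rk1 (w k).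
Proof.
move=> /psd_spectral [P [d [PP PP' Aeq d0]]].
exists (fun k => sqrtC (d 0 k) *: adjmx (row k P)).
rewrite Aeq; apply/matrixP=> i j.
rewrite summxE !mxE; apply: eq_bigr => k _.
rewrite rk1E !mxE (bigD1 k) //= big1; last first.
  by move=> l /negbTE lk; rewrite !mxE lk mulr0n mulr0.
have cs : forall x, (sqrtC (d 0 k) * x^* )^* = sqrtC (d 0 k) * x.
  by move=> x; rewrite rmorphM /= conjCK geC0_conj ?sqrtC_ge0.
rewrite addr0 !mxE eqxx mulr1n cs.
by rewrite mulrACA -expr2 sqrtCK mulrCA mulrA.

Qed.



Lemma vnorm_sq {C : numClosedFieldType} n (v : 'cV[C]_n) :
  vnorm v ^+ 2 = (adjmx v *m v) 0 0.
Proof. by rewrite /vnorm sqrtCK mxE; apply: eq_bigr => j _; rewrite adjmxE normCKC. Qed.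

Lemma vnorm_ge0 {C : numClosedFieldType} n (v : 'cV[C]_n) : 0 <= vnorm v.
Proof. by rewrite /vnorm sqrtC_ge0 sumr_ge0 // => j _; rewrite exprn_ge0. Qed.

Lemma qform_sum {C : numClosedFieldType} n l (v : 'cV[C]_n) (F : 'I_l -> 'M[C]_n) :
  (adjmx v *m (\sum_(j < l) F j) *m v) 0 0 = \sum_j (adjmx v *m F j *m v) 0 0.
Proof. by rewrite mulmx_sumr mulmx_suml summxE. Qed.

Lemma fin_bound {C : numDomainType} (s : seq C) :
  all (fun x => (0 <= x) && (x < 1)) s ->
  exists b : C, [/\ 0 <= b, b < 1 & all (fun x => x <= b) s].
Proof.
elim: s => [|x s IH] /=; first by exists 0; split; rewrite ?lexx ?ltr01.
move=> /andP[/andP[x0 x1] /IH [b [b0 b1 bs]]].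
have [xb|bx] := boolP (x <= b).
  by exists b; rewrite b0 b1 xb.
have bx' : b < x by rewrite real_ltNge ?ger0_real.
exists x; rewrite x0 x1 lexx; split => //=.
by apply/allP => y /(allP bs) yb; apply: le_trans yb (ltW bx').
Qed.

Lemma spec_q {C : numClosedFieldType} n (A P : 'M[C]_n) (d : 'rV[C]_n) k :
  P *m adjmx P = 1%:M -> A = adjmx P *m diag_mx d *m P ->
  adjmx (adjmx (row k P)) *m A *m adjmx (row k P) = (d 0 k)%:M.
Proof.
move=> PP Aeq.
rewrite adjmxK rowE adjmxM Aeq !mulmxA.
rewrite -(mulmxA _ P (adjmx P)) PP mulmx1 -(mulmxA _ P (adjmx P)) PP mulmx1.
apply/matrixP=> a b; rewrite !ord1.
by rewrite adj_delta -rowE -colE !mxE eqxx !mulr1n.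
Qed.

Lemma unit_row {C : numClosedFieldType} n (P : 'M[C]_n) k :
  P *m adjmx P = 1%:M -> adjmx (adjmx (row k P)) *m adjmx (row k P) = 1%:M.
Proof.
move=> PP; rewrite adjmxK rowE adjmxM mulmxA -(mulmxA _ P) PP mulmx1 adj_delta.
by apply/matrixP=> a b; rewrite !ord1 -rowE !mxE eqxx.
Qed.

Lemma povm_eig {C : numClosedFieldType} p l (M : 'I_l -> 'M[C]_p) i :
  povm M -> is_opnorm (M i) 1 ->
  exists v : 'cV[C]_p, adjmx v *m v = 1%:M /\
    forall j, (adjmx v *m M j *m v) 0 0 = (i == j)%:R.
Proof.
move=> [Mpsd Msum] [_ Mmin].
have [P [d [PP PP' Meq d0]]] := psd_spectral (Mpsd i).
have [/existsP [k dk] | nok] := boolP [exists k, 1 <= d 0 k]; last first.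
  exfalso.
  have : all (fun x => (0 <= x) && (x < 1)) [seq d 0 k | k <- enum 'I_p].
    apply/allP => x /mapP [k _ ->]; rewrite d0 /= real_ltNge ?ger0_real ?ler01 ?d0 //.
    by apply/negP => H; move/negP: nok; apply; apply/existsP; exists k.
  move=> /fin_bound [b [b0 b1 bs]].
  have dkb : forall k, d 0 k <= b.
    by move=> k; apply: (allP bs); apply/mapP; exists k; rewrite ?mem_enum.
  suff : 1 <= b by rewrite real_leNgt ?b1 ?ger0_real ?ler01.
  apply: Mmin => v vn.
  rewrite -(ler_pXn2r (n:=2)) // ?qualifE /= ?vnorm_ge0 // vnorm_sq.
  have hM : adjmx (M i) = M i by case: (Mpsd i).
  rewrite adjmxM hM Meq.
  set y := P *m v.
  have -> : adjmx v *m (adjmx P *m diag_mx d *m P) *m (adjmx P *m diag_mx d *m P *m v)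
      = adjmx y *m diag_mx (\row_j (d 0 j * d 0 j)) *m y.
    rewrite /y adjmxM -mulmx_diag !mulmxA.
    by rewrite -(mulmxA _ P (adjmx P)) PP mulmx1.
  have yn : (adjmx y *m y) 0 0 = 1.
    by rewrite /y adjmxM mulmxA -(mulmxA _ (adjmx P)) PP' mulmx1 -vnorm_sq vn expr1n.
  clearbody y.
  rewrite -[_ ^+ 2]mulr1 -yn !mxE mulr_sumr; apply: ler_sum => j _.
  rewrite !mxE (bigD1 j) //= big1; last first.
    by move=> a /negbTE aj; rewrite !mxE aj mulr0n mulr0.
  rewrite addr0 !mxE eqxx mulr1n mulrAC [b ^+ 2 * _]mulrC ler_wpM2l //.
    by rewrite mulrC mul_conjC_ge0.
  by rewrite expr2 ler_pM // d0.
exists (adjmx (row k P)); split; first exact: unit_row.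
have qi := spec_q k PP Meq.
have q0 : forall j, 0 <= (adjmx (adjmx (row k P)) *m M j *m adjmx (row k P)) 0 0.
  by move=> j; case: (Mpsd j) => _; apply.
set q := fun j => (adjmx (adjmx (row k P)) *m M j *m adjmx (row k P)) 0 0.
have qsum : \sum_j q j = 1.
  by rewrite /q -qform_sum Msum mulmx1 unit_row // mxE.
have qii : 1 <= q i by rewrite /q qi mxE eqxx mulr1n.
have rest : \sum_(j | j != i) q j = 1 - q i.
  by rewrite -qsum [in RHS](bigD1 i) //= addrC addrK.
have qi1 : q i = 1.
  by apply/le_anti; rewrite qii andbT -subr_ge0 -rest sumr_ge0 // => j _; apply: q0.
have rest0 : \sum_(j | j != i) q j = 0 by rewrite rest qi1 subrr.
move=> j; have [<-|ij] := eqVneq i j; first by rewrite -/(q i) qi1.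
rewrite -/(q j) (psumr_eq0P _ rest0) ?(negbTE ij) //; first by move=> a _; apply: q0.
by rewrite eq_sym.
Qed.




Lemma lin0 {C : numClosedFieldType} {m n : nat} {Phi : 'M[C]_m -> 'M[C]_n} (hl : is_linear_map Phi) : Phi 0 = 0.
Proof.
have h := hl 1 0 0; rewrite !scale1r addr0 in h.
by apply: (addrI (Phi 0)); rewrite addr0 -h.
Qed.

Lemma linD {C : numClosedFieldType} {m n : nat} {Phi : 'M[C]_m -> 'M[C]_n} (hl : is_linear_map Phi) X Y : Phi (X + Y) = Phi X + Phi Y.
Proof. by have := hl 1 X Y; rewrite !scale1r. Qed.

Lemma linZ {C : numClosedFieldType} {m n : nat} {Phi : 'M[C]_m -> 'M[C]_n} (hl : is_linear_map Phi) a X : Phi (a *: X) = a *: Phi X.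
Proof. by have := hl a X 0; rewrite !addr0 (lin0 hl) addr0. Qed.

Lemma lin_sum {C : numClosedFieldType} {m n : nat} {Phi : 'M[C]_m -> 'M[C]_n} (hl : is_linear_map Phi) (I : Type) (r : seq I) (P : pred I) F :
  Phi (\sum_(i <- r | P i) F i) = \sum_(i <- r | P i) Phi (F i).
Proof. exact: (big_morph Phi (linD hl) (lin0 hl)). Qed.

Lemma lin_delta {C : numClosedFieldType} {m n : nat} {Phi : 'M[C]_m -> 'M[C]_n} (hl : is_linear_map Phi) X : Phi X = \sum_(a < m) \sum_(b < m) X a b *: Phi (delta_mx a b).
Proof.
rewrite {1}(matrix_sum_delta X) (lin_sum hl); apply: eq_bigr => a _.
by rewrite (lin_sum hl); apply: eq_bigr => b _; rewrite (linZ hl).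
Qed.

Lemma tensmxDl {C : numClosedFieldType} m n p q (A B : 'M[C]_(m,n)) (D : 'M[C]_(p,q)) :
  (A + B) *t D = A *t D + B *t D.
Proof. by apply/matrixP=> i j; rewrite !mxE mulrDl. Qed.

Lemma tensmxDr {C : numClosedFieldType} m n p q (A : 'M[C]_(m,n)) (B D : 'M[C]_(p,q)) :
  A *t (B + D) = A *t B + A *t D.
Proof. by apply/matrixP=> i j; rewrite !mxE mulrDr. Qed.

Lemma tensmxZl {C : numClosedFieldType} m n p q a (A : 'M[C]_(m,n)) (D : 'M[C]_(p,q)) :
  (a *: A) *t D = a *: (A *t D).
Proof. by apply/matrixP=> i j; rewrite !mxE mulrA. Qed.

Lemma tensmxZr {C : numClosedFieldType} m n p q a (A : 'M[C]_(m,n)) (D : 'M[C]_(p,q)) :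
  A *t (a *: D) = a *: (A *t D).
Proof. by apply/matrixP=> i j; rewrite !mxE mulrCA. Qed.

Lemma tensmx_suml {C : numClosedFieldType} m n p q (I : Type) (r : seq I) (P : pred I)
  (F : I -> 'M[C]_(m,n)) (D : 'M[C]_(p,q)) :
  (\sum_(i <- r | P i) F i) *t D = \sum_(i <- r | P i) (F i *t D).
Proof.
apply: (big_morph (fun A => A *t D)); first by move=> A B; apply: tensmxDl.
exact: tens0mx.
Qed.

Lemma tensmx_sumr {C : numClosedFieldType} m n p q (I : Type) (r : seq I) (P : pred I)
  (A : 'M[C]_(m,n)) (F : I -> 'M[C]_(p,q)) :
  A *t (\sum_(i <- r | P i) F i) = \sum_(i <- r | P i) (A *t F i).
Proof.
apply: (big_morph (fun D => A *t D)); first by move=> B D; apply: tensmxDr.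
exact: tensmx0.
Qed.

Lemma tensmap_lin {C : numClosedFieldType} m n p q
  (Phi : 'M[C]_m -> 'M[C]_n) (Psi : 'M[C]_p -> 'M[C]_q) :
  is_linear_map (tensmap Phi Psi).
Proof.
move=> a X Y; rewrite /tensmap scaler_sumr -big_split; apply: eq_bigr => i _ /=.
rewrite scaler_sumr -big_split; apply: eq_bigr => j _ /=.
rewrite scaler_sumr -big_split; apply: eq_bigr => s _ /=.
rewrite scaler_sumr -big_split; apply: eq_bigr => t _ /=.
by rewrite !mxE scalerDl scalerA.
Qed.

Lemma tensmap_tens {C : numClosedFieldType} m n p q
  (Phi : 'M[C]_m -> 'M[C]_n) (Psi : 'M[C]_p -> 'M[C]_q) A B :
  is_linear_map Phi -> is_linear_map Psi ->
  tensmap Phi Psi (A *t B) = Phi A *t Psi B.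
Proof.
move=> hP hQ; rewrite (lin_delta hP A) (lin_delta hQ B) /tensmap tensmx_suml.
apply: eq_bigr => a _; rewrite tensmx_suml; apply: eq_bigr => b _.
rewrite tensmxZl tensmx_sumr scaler_sumr; apply: eq_bigr => s _.
rewrite tensmx_sumr scaler_sumr; apply: eq_bigr => t _.
by rewrite tensmxE tensmxZr scalerA.
Qed.

Lemma tr_tens {C : numClosedFieldType} m n (A : 'M[C]_m) (B : 'M[C]_n) :
  \tr (A *t B) = \tr A * \tr B.
Proof. by rewrite /mxtrace mulr_sum; apply: eq_bigr => k _; rewrite mxE. Qed.

Lemma psd_tens {C : numClosedFieldType} m n (A : 'M[C]_m) (B : 'M[C]_n) :
  psd A -> psd B -> psd (A *t B).
Proof.
move=> /psd_decomp [w ->] /psd_decomp [x ->].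
rewrite tensmx_suml; apply: psd_sum => k _; rewrite tensmx_sumr.
apply: psd_sum => k' _.
have -> : rk1 (w k) *t rk1 (x k') =
   rk1 (\col_i (w k (mxtens_unindex i).1 0 * x k' (mxtens_unindex i).2 0)).
  apply/matrixP=> i j; rewrite [LHS]mxE !rk1E !mxE rmorphM; ring.
exact: psd_rk1.
Qed.

Lemma density_tens {C : numClosedFieldType} m n (A : 'M[C]_m) (B : 'M[C]_n) :
  density A -> density B -> density (A *t B).
Proof.
move=> [pA tA] [pB tB]; split; first exact: psd_tens.
by rewrite tr_tens tA tB mulr1.
Qed.

Lemma density_conv {C : numClosedFieldType} n (t : C) (A B : 'M[C]_n) :
  0 <= t <= 1 -> density A -> density B -> density (t *: A + (1 - t) *: B).
Proof.
move=> /andP[t0 t1] [pA tA] [pB tB]; split.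
  by apply: psdD; apply: psdZ => //; rewrite subr_ge0.
by rewrite mxtraceD !mxtraceZ tA tB !mulr1 addrC subrK.
Qed.



Definition pR {C : numClosedFieldType} p N (A : 'M[C]_p) (rho : 'M[C]_(p * N)) : 'M[C]_N :=
  \matrix_(s, t) \sum_a \sum_b rho (mxtens_index (a, s)) (mxtens_index (b, t)) * A b a.

Definition XiF {C : numClosedFieldType} p q l (M : 'I_l -> 'M[C]_p) (sigma : 'I_l -> 'M[C]_q)
  (X : 'M[C]_p) : 'M[C]_q := \sum_(j < l) \tr (X *m M j) *: sigma j.

Lemma sum_tens {C : numClosedFieldType} m n (F : 'I_(m * n) -> C) :
  \sum_k F k = \sum_a \sum_s F (mxtens_index (a, s)).
Proof.
rewrite pair_big /= (reindex (@mxtens_index m n)) /=.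
  by apply: eq_bigr => -[a s].
by exists (@mxtens_unindex m n) => k _; rewrite (mxtens_indexK, mxtens_unindexK).
Qed.

Lemma pRDl {C : numClosedFieldType} p N (A B : 'M[C]_p) rho :
  pR (A + B) rho = pR A rho + @pR C p N B rho.
Proof.
apply/matrixP=> s t; rewrite !mxE -big_split; apply: eq_bigr => a _ /=.
by rewrite -big_split; apply: eq_bigr => b _ /=; rewrite !mxE mulrDr.
Qed.

Lemma pR0l {C : numClosedFieldType} p N rho : @pR C p N 0 rho = 0.
Proof.
apply/matrixP=> s t; rewrite !mxE big1 // => a _; rewrite big1 // => b _.
by rewrite mxE mulr0.
Qed.

Lemma pRDr {C : numClosedFieldType} p N (A : 'M[C]_p) rho1 rho2 :
  pR A (rho1 + rho2) = pR A rho1 + @pR C p N A rho2.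
Proof.
apply/matrixP=> s t; rewrite !mxE -big_split; apply: eq_bigr => a _ /=.
by rewrite -big_split; apply: eq_bigr => b _ /=; rewrite !mxE mulrDl.
Qed.

Lemma pR0r {C : numClosedFieldType} p N A : @pR C p N A 0 = 0.
Proof.
apply/matrixP=> s t; rewrite !mxE big1 // => a _; rewrite big1 // => b _.
by rewrite mxE mul0r.
Qed.

Lemma pR_suml {C : numClosedFieldType} p N (I : Type) (r : seq I) (P : pred I)
  (F : I -> 'M[C]_p) rho :
  pR (\sum_(i <- r | P i) F i) rho = \sum_(i <- r | P i) @pR C p N (F i) rho.
Proof.
apply: (big_morph (fun A => pR A rho)); first by move=> A B; apply: pRDl.
exact: pR0l.
Qed.

Lemma pR_sumr {C : numClosedFieldType} p N (I : Type) (r : seq I) (P : pred I)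
  A (F : I -> 'M[C]_(p * N)) :
  pR A (\sum_(i <- r | P i) F i) = \sum_(i <- r | P i) @pR C p N A (F i).
Proof.
apply: (big_morph (fun rho => pR A rho)); first by move=> X Y; apply: pRDr.
exact: pR0r.
Qed.

Lemma pR_rk1 {C : numClosedFieldType} p N (u : 'cV[C]_p) (w : 'cV[C]_(p * N)) :
  pR (rk1 u) (rk1 w) =
  rk1 (\col_s \sum_a (u a 0)^* * w (mxtens_index (a, s)) 0).
Proof.
apply/matrixP=> s t; rewrite rk1E !mxE rmorph_sum mulr_suml; apply: eq_bigr => a _.
rewrite mulr_sumr; apply: eq_bigr => b _.
by rewrite !rk1E rmorphM /= conjCK; ring.
Qed.

Lemma pR_psd {C : numClosedFieldType} p N (A : 'M[C]_p) (rho : 'M[C]_(p * N)) :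
  psd A -> psd rho -> psd (pR A rho).
Proof.
move=> /psd_decomp [u ->] /psd_decomp [w ->].
rewrite pR_suml; apply: psd_sum => k _; rewrite pR_sumr; apply: psd_sum => k' _.
by rewrite pR_rk1; apply: psd_rk1.
Qed.

Lemma tr_delta {C : numClosedFieldType} p (a b : 'I_p) (A : 'M[C]_p) :
  \tr (delta_mx a b *m A) = A b a.
Proof.
rewrite /mxtrace (bigD1 a) //= big1 => [|k ka]; rewrite mxE.
  rewrite (bigD1 b) //= big1 => [|j jb]; rewrite !mxE ?eqxx ?mulr1n ?mul1r ?addr0 //.
  by rewrite (negbTE jb) andbF mulr0n mul0r.
by rewrite big1 // => j _; rewrite mxE (negbTE ka) mulr0n mul0r.
Qed.

Lemma tensmap_Xi {C : numClosedFieldType} p q N k l (M : 'I_l -> 'M[C]_p)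
  (sigma : 'I_l -> 'M[C]_q) (Psi : 'M[C]_N -> 'M[C]_k) rho :
  is_linear_map Psi ->
  tensmap (XiF M sigma) Psi rho = \sum_i sigma i *t Psi (pR (M i) rho).
Proof.
move=> hQ.
have -> : \sum_i sigma i *t Psi (pR (M i) rho) =
  \sum_i \sum_s \sum_t \sum_a \sum_b
     (rho (mxtens_index (a, s)) (mxtens_index (b, t)) * M i b a) *:
       (sigma i *t Psi (delta_mx s t)).
  apply: eq_bigr => i _; rewrite (lin_delta hQ) tensmx_sumr.
  apply: eq_bigr => s _; rewrite tensmx_sumr.
  apply: eq_bigr => t _; rewrite tensmxZr mxE scaler_suml.
  by apply: eq_bigr => a _; rewrite scaler_suml.
rewrite /tensmap.
have H : forall a b s t, rho (mxtens_index (a, s)) (mxtens_index (b, t)) *: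
    (XiF M sigma (delta_mx a b) *t Psi (delta_mx s t)) =
    \sum_i (rho (mxtens_index (a, s)) (mxtens_index (b, t)) * M i b a) *:
       (sigma i *t Psi (delta_mx s t)).
  move=> a b s t; rewrite /XiF tensmx_suml scaler_sumr; apply: eq_bigr => i _.
  by rewrite tr_delta tensmxZl scalerA.
under eq_bigr => a _ do under eq_bigr => b _ do under eq_bigr => s _ do
  under eq_bigr => t _ do rewrite H.
under eq_bigr => a _ do under eq_bigr => b _ do under eq_bigr => s _ do
  rewrite exchange_big.
under eq_bigr => a _ do under eq_bigr => b _ do rewrite exchange_big.
under eq_bigr => a _ do rewrite exchange_big.
rewrite exchange_big; apply: eq_bigr => i _.
under eq_bigr => a _ do under eq_bigr => s _ do rewrite exchange_big.
under eq_bigr => a _ do rewrite exchange_big.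
under eq_bigr => a _ do under eq_bigr => t _ do rewrite exchange_big.
under eq_bigr => a _ do rewrite exchange_big.
rewrite exchange_big; apply: eq_bigr => s _.
by rewrite exchange_big.
Qed.



Lemma tr_pR1 {C : numClosedFieldType} p N (rho : 'M[C]_(p * N)) :
  \tr (pR 1%:M rho) = \tr rho.
Proof.
rewrite [RHS]/mxtrace sum_tens exchange_big /mxtrace; apply: eq_bigr => s _.
rewrite mxE; apply: eq_bigr => a _.
rewrite (bigD1 a) //= big1 => [|b ba]; rewrite !mxE.
  by rewrite eqxx mulr1 addr0.
by rewrite (negbTE ba) mulr0.
Qed.

Lemma tr_pR_sum {C : numClosedFieldType} p N l (M : 'I_l -> 'M[C]_p) rho :
  \sum_(j < l) M j = 1%:M -> \sum_i \tr (@pR C p N (M i) rho) = \tr rho.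
Proof. by move=> hs; rewrite -raddf_sum -pR_suml hs /= tr_pR1. Qed.

Lemma tr_rk1 {C : numClosedFieldType} n (w : 'cV[C]_n) :
  \tr (rk1 w) = (adjmx w *m w) 0 0.
Proof. by rewrite /rk1 mxtrace_mulC /mxtrace big_ord1. Qed.

Lemma qself_ge0 {C : numClosedFieldType} n (w : 'cV[C]_n) : 0 <= (adjmx w *m w) 0 0.
Proof. by rewrite mxE sumr_ge0 // => j _; rewrite adjmxE mulrC mul_conjC_ge0. Qed.

Lemma qself_ge0_aux {C : numClosedFieldType} n (w : 'cV[C]_n) i : 0 <= adjmx w 0 i * w i 0.
Proof. by rewrite adjmxE mulrC mul_conjC_ge0. Qed.

Lemma qself_eq0 {C : numClosedFieldType} n (w : 'cV[C]_n) : (adjmx w *m w) 0 0 = 0 -> w = 0.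
Proof.
rewrite mxE => /psumr_eq0P h; apply/matrixP=> j z; rewrite ord1 mxE.
have /eqP := h (fun i _ => qself_ge0_aux w i) j isT.
by rewrite adjmxE -normCKC expf_eq0 /= normr_eq0 => /eqP.
Qed.

Lemma psd_tr_ge0 {C : numClosedFieldType} n (A : 'M[C]_n) : psd A -> 0 <= \tr A.
Proof.
move=> /psd_decomp [w ->]; rewrite raddf_sum /= sumr_ge0 // => k _.
by rewrite tr_rk1 qself_ge0.
Qed.

Lemma psd_tr_eq0 {C : numClosedFieldType} n (A : 'M[C]_n) : psd A -> \tr A = 0 -> A = 0.
Proof.
move=> /psd_decomp [w ->]; rewrite raddf_sum /= => /psumr_eq0P h.
rewrite big1 // => k _; rewrite (@qself_eq0 _ _ (w k)) -?tr_rk1 ?h //.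
  by rewrite /rk1 mul0mx.
by move=> i _; rewrite tr_rk1 qself_ge0.
Qed.

Lemma XiF_rk1 {C : numClosedFieldType} p q l (M : 'I_l -> 'M[C]_p)
  (sigma : 'I_l -> 'M[C]_q) v :
  XiF M sigma (rk1 v) = \sum_j (adjmx v *m M j *m v) 0 0 *: sigma j.
Proof.
apply: eq_bigr => j _; congr (_ *: _).
by rewrite /rk1 -mulmxA mxtrace_mulC /mxtrace big_ord1.
Qed.

Lemma XiF_lin {C : numClosedFieldType} p q l (M : 'I_l -> 'M[C]_p)
  (sigma : 'I_l -> 'M[C]_q) : is_linear_map (XiF M sigma).
Proof.
move=> a X Y; rewrite /XiF scaler_sumr -big_split; apply: eq_bigr => j _ /=.
by rewrite mulmxDl mxtraceD -scalemxAl mxtraceZ scalerDl scalerA.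
Qed.

Lemma conv_convex {C : numClosedFieldType} n (S : 'M[C]_n -> Prop) : convex_set (conv S).
Proof. by move=> t X Y ht hX hY T cT sT; exact: (cT t X Y ht (hX T cT sT) (hY T cT sT)). Qed.

Lemma conv_sub {C : numClosedFieldType} n (S : 'M[C]_n -> Prop) X : S X -> conv S X.
Proof. by move=> hX T _ sT; apply: sT. Qed.

Lemma seq_sum0 {C : numClosedFieldType} (I : eqType) (r : seq I) (c : I -> C) :
  (forall i, 0 <= c i) -> \sum_(i <- r) c i = 0 -> forall i, i \in r -> c i = 0.
Proof.
move=> c0; elim: r => [|j r IH] //=; rewrite big_cons => h i.
have /andP[/eqP cj /eqP cr] : (c j == 0) && (\sum_(i <- r) c i == 0).
  by rewrite -paddr_eq0 ?h // sumr_ge0.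
by rewrite inE => /orP[/eqP ->|/IH]; [|apply].
Qed.

Lemma conv_comb {C : numClosedFieldType} n (S : 'M[C]_n -> Prop) l (c : 'I_l -> C)
  (Y : 'I_l -> 'M[C]_n) :
  (forall i, 0 <= c i) -> \sum_i c i = 1 ->
  (forall i, c i != 0 -> exists X, S X /\ Y i = c i *: X) ->
  (forall i, c i = 0 -> Y i = 0) -> conv S (\sum_i Y i).
Proof.
move=> c0 c1 hY hY0.
have z : forall r : seq 'I_l, \sum_(i <- r) c i = 0 -> \sum_(i <- r) Y i = 0.
  move=> r hr; rewrite big_seq big1 // => i ir; apply: hY0.
  exact: (seq_sum0 c0 hr).
suff : forall r : seq 'I_l, \sum_(i <- r) c i != 0 ->
    conv S ((\sum_(i <- r) c i)^-1 *: \sum_(i <- r) Y i).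
  by move=> /(_ (index_enum _)); rewrite c1 invr1 scale1r; apply; rewrite oner_eq0.
elim=> [|j r IH]; first by rewrite big_nil eqxx.
rewrite !big_cons => hs.
have sr0 : 0 <= \sum_(i <- r) c i by rewrite sumr_ge0.
have [sr|srn] := eqVneq (\sum_(i <- r) c i) 0.
  rewrite sr addr0 in hs *; rewrite z // addr0.
  have [X [SX ->]] := hY j hs.
  by rewrite scalerA mulVf // scale1r; apply: conv_sub.
have [cj|cjn] := eqVneq (c j) 0.
  by rewrite cj add0r hY0 // add0r; apply: IH.
have [X [SX ->]] := hY j cjn.
set s := c j + _ in hs *.
have spos : 0 < s by rewrite lt_def hs addr_ge0.
set t := c j / s.
have -> : s^-1 *: (c j *: X + \sum_(i <- r) Y i) =
   t *: X + (1 - t) *: ((\sum_(i <- r) c i)^-1 *: \sum_(i <- r) Y i).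
  rewrite scalerDr scalerA scalerA /t mulrC; congr (_ + _).
  have -> : 1 - c j / s = (\sum_(i <- r) c i) / s.
    by rewrite -[1](divff hs) /s -mulrBl addrC addKr.
  by rewrite mulrAC mulfV // mul1r.
apply: conv_convex => //; last by apply: IH.
  rewrite /t divr_ge0 ?(ltW spos) //= ler_pdivrMr // mul1r /s lerDl //.
by apply: conv_sub.
Qed.



Theorem theorem8p7 (R : realType) (p q l N k : nat)
  (M : 'I_l -> 'M[R[i]]_p) (sigma : 'I_l -> 'M[R[i]]_q)
  (Psi : 'M[R[i]]_N -> 'M[R[i]]_k) :
  povm M ->
  (forall j, is_opnorm (M j) 1) ->
  (forall j, density (sigma j)) ->
  quantum_channel Psi ->
  let Xi := fun X : 'M[R[i]]_p => \sum_(j < l) \tr (X *m M j) *: sigma j in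
  forall Z : 'M[R[i]]_(q * k),
    image_of_states (tensmap Xi Psi) Z <->
    tens_set (image_of_states Xi) (image_of_states Psi) Z.
Proof.
move=> hM hnorm hsig hPsi Xi Z.
change (image_of_states (tensmap (XiF M sigma) Psi) Z <->
  tens_set (image_of_states (XiF M sigma)) (image_of_states Psi) Z).
have [hlin _ _] := hPsi.
have [Mpsd Msum] := hM.
split.
  move=> [rho [[rpsd rtr] <-]].
  rewrite tensmap_Xi //.
  apply: (@conv_comb _ _ _ _ (fun i => \tr (pR (M i) rho))).
  - by move=> i; apply: psd_tr_ge0; apply: pR_psd.
  - by rewrite tr_pR_sum.
  - move=> i ci.
    set c := \tr _ in ci.
    exists (sigma i *t Psi (c^-1 *: pR (M i) rho)); split.
      exists (sigma i), (Psi (c^-1 *: pR (M i) rho)); split => //.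
        have [v [vn vq]] := povm_eig hM (hnorm i).
        exists (rk1 v); split.
          by split; [apply: psd_rk1|rewrite tr_rk1 vn mxE].
        rewrite XiF_rk1 (bigD1 i) //= big1 => [|j ji]; rewrite vq.
          by rewrite eqxx scale1r addr0.
        by rewrite eq_sym (negbTE ji) scale0r.
      exists (c^-1 *: pR (M i) rho); split => //; split.
        apply: psdZ; first by rewrite invr_ge0 psd_tr_ge0 //; apply: pR_psd.
        exact: pR_psd.
      by rewrite mxtraceZ mulVf.
    by rewrite (linZ hlin) tensmxZr scalerA mulfV // scale1r.
  - move=> i ci; rewrite (psd_tr_eq0 _ ci); last by apply: pR_psd.
    rewrite (lin0 hlin).
    exact: tensmx0.
move=> hZ; apply: hZ.
  move=> t X Y ht [r1 [d1 <-]] [r2 [d2 <-]].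
  exists (t *: r1 + (1 - t) *: r2); split; first exact: density_conv.
  by rewrite tensmap_lin (linZ (tensmap_lin _ _)).
move=> W [X [Y [[r [dr <-]] [tau [dtau <-]] ->]]].
exists (r *t tau); split; first exact: density_tens.
by apply: tensmap_tens => //; apply: XiF_lin.
Qed.
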